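(* Let $X=(x_1,\dots,x_n)$, $n>0$, be a finite sequence of positive reals and $0<q\le1$. For a finite sequence $W$ of length $k$ with sorted values $w_{(1)}\le\dots\le w_{(k)}$, put $Q^1_q(W)=w_{(\lceil qk\rceil)}$. Consider the positive circllhist bins $B_{e,d}=[a,b)$ with $a=d\cdot10^{e-1}$, $b=(d+1)\cdot10^{e-1}$, $e\in\mathbb{Z}$, $d\in\{10,\dots,99\}$, and counts $H(e,d)=\#\{j:x_j\in B_{e,d}\}$. Let $\hat X^p$ be the paretro-midpoint resampling (for each bin, $H(e,d)$ copies of $\frac{2ab}{a+b}$) and $\hat X^f$ the fair resampling (for each bin with $H(e,d)=k$, the points $a+\frac{l}{k+1}(b-a)$, $l=1,\dots,k$). Then: (1) $|Q^1_q(X)-Q^1_q(\hat X^p)|\le\frac1{21}Q^1_q(X)$; (2) $|Q^1_q(X)-Q^1_q(\hat X^f)|\le\frac1{10}Q^1_q(X)$; and if the bin containing $Q^1_q(X)$ contains exactly one element of $X$, then $|Q^1_q(X)-Q^1_q(\hat X^f)|\le\frac{1}{20}Q^1_q(X)$.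
   Context: The resamplings $\hat X^p$ and $\hat X^f$ are finite sequences of length $n$ (taken over all bins). *)

(* Defs.v *)
From HB Require Import structures.
From mathcomp Require Import all_boot all_order all_algebra.
From mathcomp Require Import all_classical all_reals.
From mathcomp Require Import exp.
Set Implicit Arguments. Unset Strict Implicit. Unset Printing Implicit Defensive.
Import Order.TTheory GRing.Theory Num.Theory.
Local Open Scope ring_scope.

Section Circllhist.
Variable R : realType.

(* Q^1_q(W) = w_(ceil(q k)) (1-indexed order statistic), k = size W *)
Definition Q1 (q : R) (W : seq R) : R :=
  nth 0 (sort (fun x y : R => x <= y) W)
      (`|Num.ceil (q * (size W)%:R)|%N).-1.

(* bin B_{e,d} = [d*10^(e-1), (d+1)*10^(e-1)), e : int, d in 10..99 *)
Definition bin_lo (b : int * int) : R := (b.2)%:~R * (10 : R) ^ (b.1 - 1).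
Definition bin_hi (b : int * int) : R := (b.2 + 1)%:~R * (10 : R) ^ (b.1 - 1).

Definition bin_e (x : R) : int := Num.floor (ln x / ln 10).
Definition bin_of (x : R) : int * int :=
  (bin_e x, Num.floor (x / (10 : R) ^ (bin_e x - 1))).

Definition H (X : seq R) (b : int * int) : nat :=
  count (fun x => bin_of x == b) X.

Definition occupied_bins (X : seq R) : seq (int * int) :=
  undup (map bin_of X).

Definition resample_p (X : seq R) : seq R :=
  flatten [seq nseq (H X b)
                 (2 * bin_lo b * bin_hi b / (bin_lo b + bin_hi b))
          | b <- occupied_bins X].

Definition resample_f (X : seq R) : seq R :=
  flatten [seq mkseq (fun l => bin_lo b + (l.+1)%:R / ((H X b).+1)%:R
                                          * (bin_hi b - bin_lo b)) (H X b)
          | b <- occupied_bins X].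

End Circllhist.

(* Main.v *)
Require Import Defs.
From HB Require Import structures.
From mathcomp Require Import all_boot all_order all_algebra.
From mathcomp Require Import all_classical all_reals.
From mathcomp Require Import exp.
From mathcomp Require Import lra.
Set Implicit Arguments. Unset Strict Implicit.
Import Order.TTheory GRing.Theory Num.Theory.
Local Open Scope ring_scope.
Section Aux.
Variable R : realType.

Lemma ln10_gt0 : 0 < ln (10 : R).
Proof. by apply: ln_gt0; rewrite ltr1n. Qed.

Lemma pow10_gt0 (e : int) : 0 < (10 : R) ^ e.
Proof. by rewrite exprz_gt0. Qed.

Lemma ln_pow10 (e : int) : ln ((10 : R) ^ e) = e%:~R * ln 10.
Proof.
case: e => n.
  by rewrite /= lnXn // mulrC mulrzr.
have h1 : (10:R) ^ (Negz n) * (10 ^+ n.+1) = 1.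
  by rewrite NegzE -exprnN mulVf //; apply: lt0r_neq0; rewrite exprn_gt0.
have h2 : ln ((10:R) ^ (Negz n)) + ln (10 ^+ n.+1) = 0.
  rewrite -lnM ?h1 ?ln1 // posrE ?exprz_gt0 //.
  by rewrite exprn_gt0.
rewrite lnXn // in h2.
have -> : ln ((10:R) ^ (Negz n)) = - (ln 10 *+ n.+1) by apply/eqP; rewrite -subr_eq0 opprK h2.
by rewrite NegzE intrN mulNr mulrC mulrzr.
Qed.

Lemma pow10_le (e : int) (w : R) : 0 < w ->
  ((10:R) ^ e <= w) = (e%:~R <= ln w / ln 10).
Proof.
move=> w0; rewrite ler_pdivlMr ?ln10_gt0 // -ln_pow10.
by rewrite ler_ln // posrE ?pow10_gt0.
Qed.

Lemma pow10_lt (e : int) (w : R) : 0 < w ->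
  (w < (10:R) ^ e) = (ln w / ln 10 < e%:~R).
Proof.
move=> w0; rewrite ltr_pdivrMr ?ln10_gt0 // -ln_pow10.
by rewrite ltr_ln // posrE ?pow10_gt0.
Qed.

Lemma bin_e_eq (w : R) (e : int) : 0 < w ->
  (10:R) ^ e <= w -> w < 10 ^ (e + 1) -> bin_e w = e.
Proof.
move=> w0; rewrite pow10_le // pow10_lt // => h1 h2.
by apply: floor_def; rewrite h1 h2.
Qed.

Lemma bin_e_itv (w : R) : 0 < w ->
  (10:R) ^ (bin_e w) <= w /\ w < 10 ^ (bin_e w + 1).
Proof.
move=> w0; rewrite pow10_le // pow10_lt //.
by have /andP[] := floor_itv (ln w / ln (10:R)).
Qed.

Lemma pow10S (e : int) : (10:R) ^ (e + 1) = 10 ^ e * 10.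
Proof. by rewrite expfzDr ?expr1z //; apply: lt0r_neq0; rewrite ltr0n. Qed.

Definition bin_ok (b : int * int) := (10 <= b.2) && (b.2 <= 99).

Lemma bin_of_spec (z : R) : 0 < z ->
  bin_ok (bin_of z) /\ bin_lo R (bin_of z) <= z < bin_hi R (bin_of z).
Proof.
move=> z0; have [h1 h2] := bin_e_itv z0.
rewrite /bin_ok /bin_lo /bin_hi /bin_of /=.
set e := bin_e z in h1 h2 *.
have t0 : 0 < (10:R) ^ (e - 1) := pow10_gt0 _.
have E1 : (10:R) ^ e = 10 ^ (e - 1) * 10 by rewrite -pow10S subrK.
have E2 : (10:R) ^ (e + 1) = 10 ^ (e - 1) * 10 * 10 by rewrite pow10S E1.
rewrite E1 in h1; rewrite E2 in h2.
have /andP[f1 f2] := floor_itv (z / (10:R) ^ (e - 1)).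
rewrite floor_ge_int -ltzD1 floor_lt_int.
rewrite ler_pdivlMr // ltr_pdivrMr //.
rewrite ler_pdivlMr // ltr_pdivrMr // in f1 f2.
rewrite f1 f2 !andbT.
have -> : (10:int)%:~R = (10:R) by [].
have -> : (99 + 1 : int)%:~R = (10:R) * 10 by rewrite (_ : (99 + 1 : int) = 10 * 10) // intrM.
rewrite mulrC h1 /=; split => //.
by rewrite mulrC mulrA.
Qed.

Lemma bin_of_in (b : int * int) (w : R) : bin_ok b ->
  bin_lo R b <= w < bin_hi R b -> bin_of w = b.
Proof.
case: b => e d; rewrite /bin_ok /bin_lo /bin_hi /= => /andP[d1 d2] /andP[w1 w2].
have t0 : 0 < (10:R) ^ (e - 1) := pow10_gt0 _.
have d1' : (10:R) <= d%:~R by rewrite (_ : (10:R) = (10:int)%:~R) // ler_int.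
have d2' : (d + 1)%:~R <= (100:R) by rewrite (_ : (100:R) = (100:int)%:~R) // ler_int (_ : (100:int) = 99 + 1) // lerD2r.
have w0 : 0 < w.
  apply: lt_le_trans w1; apply: mulr_gt0 => //; apply: lt_le_trans d1' => //.
have E1 : (10:R) ^ e = 10 ^ (e - 1) * 10 by rewrite -pow10S subrK.
have E2 : (10:R) ^ (e + 1) = 10 ^ (e - 1) * 10 * 10 by rewrite pow10S E1.
have he : bin_e w = e.
  apply: bin_e_eq => //.
    by rewrite E1; apply: le_trans w1; rewrite mulrC ler_pM2r.
  apply: (lt_le_trans w2); rewrite E2 -mulrA [_ * (10 * 10)]mulrC ler_pM2r //.
  by apply: le_trans d2' _; rewrite le_eqVlt; apply/orP; left; apply/eqP; rewrite -natrM.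
rewrite /bin_of he; congr pair; apply: floor_def.
by rewrite ler_pdivlMr // ltr_pdivrMr // w1 w2.
Qed.



Lemma bin_ratio (b : int * int) : bin_ok b ->
  [/\ 0 < bin_lo R b, bin_lo R b < bin_hi R b &
      10 * bin_hi R b <= 11 * bin_lo R b].
Proof.
case: b => e d; rewrite /bin_ok /bin_lo /bin_hi /= => /andP[d1 _].
have t0 : 0 < (10:R) ^ (e - 1) := pow10_gt0 _.
have d1' : (10:R) <= d%:~R by rewrite (_ : (10:R) = (10:int)%:~R) // ler_int.
rewrite intrD.
set t := (10:R) ^ (e - 1) in t0 *; set D := (d%:~R : R) in d1' *.
split; nra.
Qed.

Lemma fin_p (a b x y : R) : 0 < a -> a < b -> 10 * b <= 11 * a ->
  a <= x -> x < b -> y = 2 * a * b / (a + b) -> `|x - y| <= 21^-1 * x.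
Proof.
move=> a0 ab r ax xb ->.
have ab0 : 0 < a + b by lra.
set v := 2 * a * b / (a + b).
have hy : v * (a + b) = 2 * a * b by rewrite /v mulfVK // lt0r_neq0.
rewrite ler_norml; apply/andP; split; nra.
Qed.



Lemma hm_in (a b : R) : 0 < a -> a < b -> a <= 2 * a * b / (a + b) < b.
Proof.
move=> a0 ab; have ab0 : 0 < a + b by lra.
set v := 2 * a * b / (a + b).
have hy : v * (a + b) = 2 * a * b by rewrite /v mulfVK // lt0r_neq0.
apply/andP; split; nra.
Qed.

Lemma fv_in (a b : R) (l m : nat) : 0 < a -> a < b -> (l < m)%N ->
  a < a + l.+1%:R / m.+1%:R * (b - a) < b.
Proof.
move=> a0 ab lm.
have m0 : (0:R) < m.+1%:R by rewrite ltr0n.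
have l0 : (0:R) < l.+1%:R by rewrite ltr0n.
have lm' : (l.+1%:R : R) < m.+1%:R by rewrite ltr_nat ltnS.
set r := l.+1%:R / m.+1%:R.
have r0 : 0 < r by rewrite /r divr_gt0.
have r1 : r < 1 by rewrite /r ltr_pdivrMr // mul1r.
apply/andP; split; nra.
Qed.

Lemma fin_f (a b x y : R) : 0 < a -> a < b -> 10 * b <= 11 * a ->
  a <= x -> x < b -> a < y < b -> `|x - y| <= 10^-1 * x.
Proof.
move=> a0 ab r ax xb /andP[ya yb].
rewrite ler_norml; apply/andP; split; lra.
Qed.

Lemma fin_f1 (a b x : R) : 0 < a -> a < b -> 10 * b <= 11 * a ->
  a <= x -> x < b -> `|x - (a + 1%:R / 2%:R * (b - a))| <= 20^-1 * x.
Proof.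
move=> a0 ab r ax xb.
rewrite ler_norml; apply/andP; split; lra.
Qed.



Definition pos (x : R) := 0 < x.

Lemma map_constE (T U : Type) (c : U) (s : seq T) : map (fun _ => c) s = nseq (size s) c.
Proof. by elim: s => //= x s ->. Qed.

Lemma occ_ok (X : seq R) b : all pos X -> b \in occupied_bins X ->
  exists2 z, z \in X & b = bin_of z /\ bin_ok b.
Proof.
move=> /allP hX; rewrite mem_undup => /mapP[z zX ->].
exists z => //; split => //; have [] := bin_of_spec (hX z zX); done.
Qed.

Lemma resample_p_mem (X : seq R) y : y \in resample_p X ->
  exists2 b, b \in occupied_bins X &
    y = 2 * bin_lo R b * bin_hi R b / (bin_lo R b + bin_hi R b).
Proof.
case/flattenP => s /mapP[b bX ->]; rewrite mem_nseq => /andP[_ /eqP ->].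
by exists b.
Qed.

Lemma resample_f_mem (X : seq R) y : y \in resample_f X ->
  exists2 b, b \in occupied_bins X & exists2 l, (l < H X b)%N &
    y = bin_lo R b + (l.+1)%:R / ((H X b).+1)%:R * (bin_hi R b - bin_lo R b).
Proof.
case/flattenP => s /mapP[b bX ->] /mapP[l]; rewrite mem_iota add0n => /andP[_ lH] ->.
by exists b => //; exists l.
Qed.

Lemma H_count (X : seq R) b : H X b = count_mem b (map (@bin_of R) X).
Proof. by rewrite /H count_map. Qed.

Lemma perm_bins (X : seq R) (f : int * int -> nat -> R) :
  all pos X ->
  (forall b l, bin_ok b -> (l < H X b)%N -> bin_lo R b <= f b l < bin_hi R b) ->
  perm_eq (map (@bin_of R) (flatten [seq mkseq (f b) (H X b) | b <- occupied_bins X]))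
          (map (@bin_of R) X).
Proof.
move=> hX hf.
rewrite map_flatten -map_comp.
have -> : [seq (map (@bin_of R) \o (fun b => mkseq (f b) (H X b))) i | i <- occupied_bins X]
   = [seq nseq (count_mem b (map (@bin_of R) X)) b | b <- undup (map (@bin_of R) X)].
  rewrite /occupied_bins; apply/eq_in_map => b bX /=.
  have [z zX [_ okb]] := occ_ok hX bX.
  rewrite -H_count /mkseq -map_comp.
  rewrite (_ : nseq (H X b) b = map (fun _ => b) (iota 0 (H X b))); last first.
    by rewrite map_constE size_iota.
  apply/eq_in_map => l; rewrite mem_iota add0n => /= lH.
  by apply: bin_of_in => //; apply: hf.
exact: perm_count_undup.
Qed.

Lemma resample_p_eq (X : seq R) : resample_p X =
  flatten [seq mkseq (fun _ : nat => 2 * bin_lo R b * bin_hi R b / (bin_lo R b + bin_hi R b)) (H X b)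
          | b <- occupied_bins X].
Proof.
rewrite /resample_p; congr flatten; apply: eq_map => b.
by rewrite /mkseq map_constE size_iota.
Qed.

Lemma perm_p (X : seq R) : all pos X ->
  perm_eq (map (@bin_of R) (resample_p X)) (map (@bin_of R) X).
Proof.
move=> hX; rewrite resample_p_eq; apply: perm_bins => // b l okb _.
by have [h1 h2 _] := bin_ratio okb; apply: hm_in.
Qed.

Lemma perm_f (X : seq R) : all pos X ->
  perm_eq (map (@bin_of R) (resample_f X)) (map (@bin_of R) X).
Proof.
move=> hX; apply: perm_bins => // b l okb lH.
have [h1 h2 _] := bin_ratio okb.
by have /andP[u v] := fv_in h1 h2 lH; rewrite (ltW u) v.
Qed.

Lemma pos_p (X : seq R) : all pos X -> all pos (resample_p X).
Proof.
move=> hX; apply/allP => y /resample_p_mem[b bX ->].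
have [z _ [_ okb]] := occ_ok hX bX; have [h1 h2 _] := bin_ratio okb.
by have /andP[u _] := hm_in h1 h2; rewrite /pos; apply: lt_le_trans u.
Qed.

Lemma pos_f (X : seq R) : all pos X -> all pos (resample_f X).
Proof.
move=> hX; apply/allP => y /resample_f_mem[b bX [l lH ->]].
have [z _ [_ okb]] := occ_ok hX bX; have [h1 h2 _] := bin_ratio okb.
by have /andP[u _] := fv_in h1 h2 lH; rewrite /pos; apply: lt_trans u.
Qed.



Definition lerel := (fun x y : R => x <= y).

Lemma ostatA (s : seq R) k c : sorted lerel s -> (k < size s)%N ->
  nth 0 s k < c -> (k < count (fun z : R => (z < c)%R) s)%N.
Proof.
elim: s k => // h t IH [|k] /= st ks hk.
  by rewrite hk.
have ht : all (lerel h) t := order_path_min (@le_trans _ _) st.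
have hle : h <= nth 0 t k by apply: (allP ht); rewrite mem_nth.
rewrite (le_lt_trans hle hk) add1n ltnS; apply: IH => //.
exact: path_sorted st.
Qed.

Lemma ostatB (s : seq R) k c : sorted lerel s -> (k < size s)%N ->
  c <= nth 0 s k -> (count (fun z : R => (z < c)%R) s <= k)%N.
Proof.
elim: s k => // h t IH [|k] /= st ks hk.
  have ht : all (lerel h) t := order_path_min (@le_trans _ _) st.
  rewrite ltNge hk /= add0n leqn0 -/(nilp _) eqn0Ngt -has_count; apply/hasPn => z zt.
  by rewrite -leNgt; apply: le_trans hk _; apply: (allP ht).
rewrite -add1n; apply: leq_add; first exact: leq_b1.
by apply: IH => //; exact: path_sorted st.
Qed.

Lemma count_bin (X Y : seq R) (p : pred R) (p' : pred (int * int)) :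
  perm_eq (map (@bin_of R) Y) (map (@bin_of R) X) ->
  {in X, forall z, p z = p' (bin_of z)} -> {in Y, forall z, p z = p' (bin_of z)} ->
  count p Y = count p X.
Proof.
move=> hp hX hY; rewrite (eq_in_count hX) (eq_in_count hY).
rewrite -!(count_map (@bin_of R) p'); by move/permP: hp.
Qed.

Lemma key (X Y : seq R) k : all pos X -> all pos Y ->
  perm_eq (map (@bin_of R) Y) (map (@bin_of R) X) -> (k < size X)%N ->
  nth 0 (sort lerel Y) k \in Y /\
  bin_of (nth 0 (sort lerel Y) k) = bin_of (nth 0 (sort lerel X) k).
Proof.
move=> /allP hX /allP hY hp kX.
have sz : size Y = size X by rewrite -(size_map (@bin_of R)) (perm_size hp) size_map.
have kY : (k < size Y)%N by rewrite sz.
have sXs : sorted lerel (sort lerel X) := sort_sorted (@le_total _ _) _.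
have sYs : sorted lerel (sort lerel Y) := sort_sorted (@le_total _ _) _.
set x := nth 0 (sort lerel X) k; set y := nth 0 (sort lerel Y) k.
have xX : x \in X by rewrite -(mem_sort lerel) mem_nth // size_sort.
have yY : y \in Y by rewrite -(mem_sort lerel) mem_nth // size_sort.
split => //.
have x0 := hX _ xX; have y0 := hY _ yY.
have [okB /andP[xa xb]] := bin_of_spec x0.
set B := bin_of x in okB xa xb *.
set a := bin_lo R B in xa *; set b := bin_hi R B in xb *.
have [a0 ab _] := bin_ratio okB.
have aB : bin_of a = B by apply: bin_of_in => //; rewrite lexx ab.
have pa : forall z, 0 < z -> (z < a) = (bin_hi R (bin_of z) <= a).
  move=> z z0; have [okz /andP[z1 z2]] := bin_of_spec z0.
  apply/idP/idP => [za|].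
    rewrite leNgt; apply/negP => ah.
    have : bin_of a = bin_of z by apply: bin_of_in => //; rewrite ah (le_trans z1) // ltW.
    by rewrite aB => E; move: z1; rewrite -E -/a leNgt za.
  by apply: lt_le_trans.
have pb : forall z, 0 < z -> (z < b) = (z < a) || (bin_of z == B).
  move=> z z0; have [okz /andP[z1 z2]] := bin_of_spec z0.
  case: (ltP z a) => za /=; first by rewrite (lt_trans za ab).
  case: (eqVneq (bin_of z) B) => [E|NE]; first by move: z2; rewrite E.
  apply/negP => zb; move/eqP: NE; apply.
  by apply: bin_of_in => //; rewrite za.
have cA : count (fun z => z < a) (sort lerel Y) = count (fun z => z < a) (sort lerel X).
  rewrite !count_sort; apply: (count_bin (p' := fun c => bin_hi R c <= a) hp).
    by move=> z /hX /pa.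
  by move=> z /hY /pa.
have cB : count (fun z => z < b) (sort lerel Y) = count (fun z => z < b) (sort lerel X).
  rewrite !count_sort; apply: (count_bin (p' := fun c => (bin_hi R c <= a) || (c == B)) hp).
    by move=> z /hX z0; rewrite pb // pa.
  by move=> z /hY z0; rewrite pb // pa.
have ya : a <= y.
  rewrite leNgt; apply/negP => ya.
  have := ostatA sYs _ ya; rewrite size_sort cA => /(_ kY).
  by rewrite ltnNge (ostatB sXs _ xa) // size_sort.
have yb : y < b.
  rewrite ltNge; apply/negP => yb.
  have := ostatB sYs _ yb; rewrite size_sort cB => /(_ kY).
  by rewrite leqNgt (ostatA sXs _ xb) // size_sort.
by apply: bin_of_in => //; rewrite ya yb.
Qed.

End Aux.
Unset Implicit Arguments.

Theorem mainTheorem11 (R : realType) (X : seq R) (q : R) :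
  (0 < size X)%N ->
  all (fun x => 0 < x) X ->
  0 < q -> q <= 1 ->
  [/\ `|Q1 q X - Q1 q (resample_p X)| <= 21^-1 * Q1 q X,
      `|Q1 q X - Q1 q (resample_f X)| <= 10^-1 * Q1 q X &
      (H X (bin_of (Q1 q X)) = 1%N ->
       `|Q1 q X - Q1 q (resample_f X)| <= 20^-1 * Q1 q X)].
Proof.
move=> n0 hX q0 q1.
have hX' : all (@pos R) X by exact: hX.
set k := (`|Num.ceil (q * (size X)%:R)|%N).-1.
have kn : (k < size X)%N.
  have c0 : 0 < Num.ceil (q * (size X)%:R) by rewrite ceil_gt0 mulr_gt0 // ltr0n.
  have c1 : Num.ceil (q * (size X)%:R) <= (size X)%:Z.
    by rewrite ceil_le_int; rewrite ler_piMl // ler0n.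
  rewrite /k; move: c0 c1; case: (Num.ceil _) => // m.
  rewrite ltz_nat lez_nat /= => m0 mn.
  by rewrite prednK ?(leq_trans _ mn) // leq_pred.
have QY : forall Y : seq R, size Y = size X -> Q1 q Y = nth 0 (sort (@lerel R) Y) k.
  by move=> Y hs; rewrite /Q1 hs.
have QX : Q1 q X = nth 0 (sort (@lerel R) X) k by [].
have szs : forall Y : seq R, perm_eq (map (@bin_of R) Y) (map (@bin_of R) X) -> size Y = size X.
  by move=> Y hp; rewrite -(size_map (@bin_of R)) (perm_size hp) size_map.
have x0 : 0 < Q1 q X.
  by rewrite QX; apply: (allP hX); rewrite -(mem_sort (@lerel R)) mem_nth ?size_sort.
have [okB /andP[xa xb]] := bin_of_spec x0.
have [a0 ab r] := bin_ratio R okB.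
split.
- have [yY yB] := key hX' (pos_p hX') (perm_p hX') kn.
  rewrite (QY _ (szs _ (perm_p hX'))).
  rewrite -QX in yB.
  move: yY yB; set y := nth 0 _ k => yY yB.
  have [b bX yE] := resample_p_mem yY.
  have [z _ [_ okb]] := occ_ok hX' bX; have [b0 bb _] := bin_ratio R okb.
  have Eb : bin_of y = b by apply: bin_of_in => //; rewrite yE; apply: hm_in.
  rewrite yB in Eb; rewrite Eb in xa xb r a0 ab.
  by apply: fin_p a0 ab r xa xb _; rewrite yE -Eb.
- have [yY yB] := key hX' (pos_f hX') (perm_f hX') kn.
  rewrite (QY _ (szs _ (perm_f hX'))).
  rewrite -QX in yB.
  move: yY yB; set y := nth 0 _ k => yY yB.
  have [b bX [l lH yE]] := resample_f_mem yY.
  have [z _ [_ okb]] := occ_ok hX' bX; have [b0 bb _] := bin_ratio R okb.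
  have yin := fv_in b0 bb lH.
  have Eb : bin_of y = b by apply: bin_of_in => //; rewrite yE; case/andP: yin => u ->; rewrite ltW.
  rewrite yB in Eb; rewrite Eb in xa xb r a0 ab.
  by apply: fin_f a0 ab r xa xb _; rewrite yE.
- move=> H1.
  have [yY yB] := key hX' (pos_f hX') (perm_f hX') kn.
  rewrite (QY _ (szs _ (perm_f hX'))).
  rewrite -QX in yB.
  move: yY yB; set y := nth 0 _ k => yY yB.
  have [b bX [l lH yE]] := resample_f_mem yY.
  have [z _ [_ okb]] := occ_ok hX' bX; have [b0 bb _] := bin_ratio R okb.
  have yin := fv_in b0 bb lH.
  have Eb : bin_of y = b by apply: bin_of_in => //; rewrite yE; case/andP: yin => u ->; rewrite ltW.
  rewrite yB in Eb; rewrite -Eb H1 in lH yE.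
  move: lH; rewrite ltnS leqn0 => /eqP l0; rewrite l0 in yE.
  rewrite Eb in yE.
  rewrite Eb in xa xb r a0 ab.
  by rewrite yE; apply: fin_f1.
Qed.
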